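(* Let $R$ be a normal (integrally closed) noetherian integral domain which is a maximal subring of a ring $T$ and is integrally closed in $T$, and let $M$ be the crucial maximal ideal of the extension $R\subseteq T$. Then $(R:T)=0$ and $R_M$ is a discrete valuation ring.
   Context: All rings are commutative with $1\neq0$ and subrings are unital. A maximal subring is a proper subring maximal with respect to inclusion among proper subrings. The conductor is $(R:T)=\{x\in T\mid Tx\subseteq R\}$. If $R$ is a maximal subring of $T$, there is a unique maximal ideal $M$ of $R$ such that $R_M$ is a maximal subring of $T_M$ and $R_P=T_P$ for every prime ideal $P\neq M$ of $R$ (localizations at $R\setminus P$); this $M$ is called the crucial maximal ideal of the extension $R\subseteq T$. *)

(* Defs.v *)
From HB Require Import structures.
From mathcomp Require Import all_boot all_order all_algebra.
From mathcomp Require Import fraction.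
Set Implicit Arguments. Unset Strict Implicit. Unset Printing Implicit Defensive.
Import Order.TTheory GRing.Theory Num.Theory.
Local Open Scope ring_scope.

Definition is_ideal (A : comNzRingType) (I : A -> Prop) : Prop :=
  [/\ I 0, (forall x y, I x -> I y -> I (x + y)) & (forall a x, I x -> I (a * x))].

Definition is_prime_ideal (A : comNzRingType) (I : A -> Prop) : Prop :=
  [/\ is_ideal I, ~ I 1 & (forall a b, I (a * b) -> I a \/ I b)].

Definition is_maximal_ideal (A : comNzRingType) (I : A -> Prop) : Prop :=
  [/\ is_ideal I, ~ I 1 &
    (forall J : A -> Prop, is_ideal J -> (forall x, I x -> J x) ->
        J 1 \/ (forall x, J x -> I x))].

Definition noetherian (A : comNzRingType) : Prop :=
  forall I : nat -> A -> Prop, (forall n, is_ideal (I n)) ->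
    (forall n x, I n x -> I n.+1 x) ->
    exists N, forall n x, (N <= n)%N -> I n x -> I N x.

Definition normal_domain (R : idomainType) : Prop :=
  forall x : {fraction R}, integralOver (@FracField.tofrac R) x ->
    exists r : R, x = FracField.tofrac r.

(** The subring R of T is given by an injective ring morphism f : R -> T,
    i.e. R is identified with its image f(R). *)
Definition is_subring (T : comNzRingType) (S : T -> Prop) : Prop :=
  [/\ S 1, (forall x y, S x -> S y -> S (x - y)) & (forall x y, S x -> S y -> S (x * y))].

Definition maximal_subring (R : comNzRingType) (T : comNzRingType) (f : R -> T) : Prop :=
  (exists t : T, forall r, t <> f r) /\
  (forall S : T -> Prop, is_subring S -> (forall r, S (f r)) ->
     (forall t, S t) \/ (forall t, S t -> exists r, t = f r)).

Definition int_closed_in (R : comNzRingType) (T : comNzRingType) (f : R -> T) : Prop :=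
  forall t : T, integralOver f t -> exists r, t = f r.

Definition conductor (R : comNzRingType) (T : comNzRingType) (f : R -> T) (x : T) : Prop :=
  forall t : T, exists r, t * x = f r.

(** Localization of T at the multiplicative set U = f(R \ P), modelled
    concretely: an element of T_U is a fraction a/s with a in T and s in U;
    fractions a/s and b/s' are equal iff u (a s' - b s) = 0 for some u in U.
    Subsets of T_U are predicates X a s on numerator/denominator pairs
    (only pairs with s in U matter) that respect this equality. *)
Section Loc.
Variables (R T : comNzRingType) (f : R -> T) (P : R -> Prop).

Definition locU (u : T) : Prop := exists s, ~ P s /\ u = f s.

Definition loc_eq (a s b s' : T) : Prop :=
  exists u, locU u /\ u * (a * s' - b * s) = 0.

Definition loc_saturated (X : T -> T -> Prop) : Prop :=
  forall a s b s', locU s -> locU s' -> loc_eq a s b s' -> X a s -> X b s'.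

Definition loc_subring (X : T -> T -> Prop) : Prop :=
  [/\ loc_saturated X, X 1 1,
    (forall a s b s', locU s -> locU s' -> X a s -> X b s' ->
        X (a * s' - b * s) (s * s')) &
    (forall a s b s', locU s -> locU s' -> X a s -> X b s' ->
        X (a * b) (s * s'))].

(** The image of R_P inside T_P: fractions equal to f r / f s with s not in P. *)
Definition loc_R (a s : T) : Prop :=
  exists r s', locU s' /\ loc_eq a s (f r) s'.

Definition loc_equal : Prop := forall a s, locU s -> loc_R a s.

Definition loc_maximal_subring : Prop :=
  (exists a s, locU s /\ ~ loc_R a s) /\
  (forall X, loc_subring X -> (forall a s, locU s -> loc_R a s -> X a s) ->
     (forall a s, locU s -> X a s) \/ (forall a s, locU s -> X a s -> loc_R a s)).
End Loc.

Definition crucial_maximal_ideal (R T : comNzRingType) (f : R -> T) (M : R -> Prop) : Prop :=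
  [/\ is_maximal_ideal M, loc_maximal_subring f M &
    (forall P : R -> Prop, is_prime_ideal P -> ~ (forall x, P x <-> M x) ->
       loc_equal f P)].

Definition loc_in_frac (R : idomainType) (M : R -> Prop) (x : {fraction R}) : Prop :=
  exists a s : R, ~ M s /\ x = FracField.tofrac a / FracField.tofrac s.

Definition discrete_valuation (K : fieldType) (v : K -> int) : Prop :=
  [/\ (forall x y, x != 0 -> y != 0 -> v (x * y) = v x + v y),
      (forall x y, x != 0 -> y != 0 -> x + y != 0 -> Num.min (v x) (v y) <= v (x + y)) &
      (forall n : int, exists x, x != 0 /\ v x = n)].

Definition is_DVR_in_frac (R : idomainType) (A : {fraction R} -> Prop) : Prop :=
  exists v : {fraction R} -> int, discrete_valuation v /\
    (forall x, A x <-> (x = 0 \/ (x != 0 /\ 0 <= v x))).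

(* Main.v *)
Require Import Defs.
From HB Require Import structures.
From mathcomp Require Import all_boot all_order all_algebra.
From mathcomp Require Import fraction ring generic_quotient.
From Stdlib Require Import Classical ClassicalEpsilon.
Set Implicit Arguments. Unset Strict Implicit. Unset Printing Implicit Defensive.
Import Order.TTheory GRing.Theory Num.Theory.
Local Open Scope ring_scope.
Local Open Scope quotient_scope.

Lemma maxel (A : comNzRingType) (noeth : noetherian A) (F : A -> A -> Prop)
  (G : A -> Prop) c0 : G c0 -> (forall c, is_ideal (F c)) ->
  exists c, G c /\ forall c', G c' -> (forall x, F c x -> F c' x) -> forall x, F c' x -> F c x.
Proof.
move=> Gc0 idF; apply: NNPP => H.
have E c : exists c', G c -> [/\ G c', (forall x, F c x -> F c' x) & exists x, F c' x /\ ~ F c x].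
  case: (classic (G c)) => Gc; last by exists c.
  apply: NNPP => H1; apply: H; exists c; split => // c' Gc' sub x Fx.
  apply: NNPP => nF; apply: H1; exists c' => _; split => //; by exists x.
pose g c := proj1_sig (constructive_indefinite_description _ (E c)).
have gP c : G c -> [/\ G (g c), (forall x, F c x -> F (g c) x) & exists x, F (g c) x /\ ~ F c x].
  exact: (proj2_sig (constructive_indefinite_description _ (E c))).
pose s n := iter n g c0.
have Gs n : G (s n) by elim: n => //= n IH; case: (gP _ IH).
have [N HN] := noeth (fun n => F (s n)) (fun n => idF _) (fun n x => let: And3 _ h _ := gP _ (Gs n) in h x).
case: (gP _ (Gs N)) => _ _ [x [Fx nFx]].
exact: nFx (HN N.+1 x (leqnSn N) Fx).
Qed.

Section Ext.
Variables (R : idomainType) (T : comNzRingType) (f : {rmorphism R -> T}).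
Hypothesis finj : injective f.
Hypothesis maxs : maximal_subring f.
Hypothesis intcl : int_closed_in f.

Lemma f0 r : f r = 0 -> r = 0.
Proof. by move=> h; apply: finj; rewrite h rmorph0. Qed.

Lemma int_X2 (x : T) (a : R) : x ^+ 2 = f a -> exists r, x = f r.
Proof.
move=> h; apply: intcl; exists ('X^2 - a%:P); first by rewrite monicXnsubC.
by rewrite /root rmorphB /= map_polyXn map_polyC /= hornerD hornerN hornerXn hornerC h subrr.
Qed.

Lemma int_idem (x : T) : x * x = x -> exists r, x = f r.
Proof.
move=> h; apply: intcl; exists ('X^2 - 'X).
  rewrite monicE lead_coefDl ?lead_coefXn // size_polyXn size_polyN size_polyX //.
by rewrite /root rmorphB /= map_polyXn map_polyX /= hornerD hornerN hornerXn hornerX expr2 h subrr.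
Qed.

Lemma NZD c x : c != 0 -> f c * x = 0 -> x = 0.
Proof.
move=> c0 hx.
have RI r : f c * f r = 0 -> r = 0.
  by rewrite -rmorphM => /f0 /eqP; rewrite mulf_eq0 (negbTE c0) => /eqP.
pose S z := exists r w, z = f r + x ^+ 2 * w.
have subS : is_subring S.
  split.
  - by exists 1, 0; rewrite rmorph1 mulr0 addr0.
  - move=> _ _ [r [w ->]] [r' [w' ->]]; exists (r - r'), (w - w').
    by rewrite rmorphB mulrBr; ring.
  - move=> _ _ [r [w ->]] [r' [w' ->]].
    exists (r * r'), (f r * w' + w * f r' + x ^+ 2 * w * w').
    by rewrite rmorphM; ring.
have inS r : S (f r) by exists r, 0; rewrite mulr0 addr0.
case: (proj2 maxs S subS inS) => [allS | subR].
- have [r [w e]] := allS x.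
  have r0 : r = 0.
    apply: RI; have -> : f r = x - x ^+ 2 * w by rewrite [X in X - _]e addrK.
    by rewrite mulrBr mulrA expr2 mulrA hx !mul0r subrr.
  move: e; rewrite r0 rmorph0 add0r => e.
  have idem : (x * w) * (x * w) = x * w.
    by rewrite [in RHS]e; ring.
  have [b eb] := int_idem idem.
  have b0 : b = 0 by apply: RI; rewrite -eb mulrA hx mul0r.
  by rewrite e expr2 -mulrA eb b0 rmorph0 mulr0.
- have [a ea] : exists a, x ^+ 2 = f a.
    by apply: subR; exists 0, 1; rewrite rmorph0 add0r mulr1.
  have a0 : a = 0 by apply: RI; rewrite -ea expr2 mulrA hx mul0r.
  have [b eb] := int_X2 (a:=a) (x:=x) ea.
  have b0 : b = 0 by apply: RI; rewrite -eb hx.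
  by rewrite eb b0 rmorph0.
Qed.

Lemma CHAIN (noeth : noetherian R) c t : c != 0 ->
  (forall k, exists r, f c * t ^+ k = f r) -> exists r, t = f r.
Proof.
move=> c0 hk.
pose J (n : nat) (r : R) := exists q : {poly R}, (size q <= n.+1)%N /\ f r = f c * (map_poly f q).[t].
have idJ n : is_ideal (J n).
  split.
  - by exists 0; rewrite size_poly0 rmorph0 rmorph0 horner0 mulr0.
  - move=> x y [q [sq eq]] [q' [sq' eq']]; exists (q + q'); split.
      by apply: leq_trans (size_polyD _ _) _; rewrite geq_max sq sq'.
    by rewrite rmorphD eq eq' rmorphD /= hornerD mulrDr.
  - move=> a x [q [sq eq]]; exists (a *: q); split.
      by apply: leq_trans (size_scale_leq _ _) _.
    by rewrite rmorphM eq map_polyZ hornerZ; ring.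
have incJ n x : J n x -> J n.+1 x.
  by move=> [q [sq eq]]; exists q; split => //; apply: leq_trans sq _.
have [N HN] := noeth J idJ incJ.
have [r er] := hk N.+1.
have : J N.+1 r.
  exists ('X^(N.+1) : {poly R}); split; first by rewrite size_polyXn.
  by rewrite -er map_polyXn hornerXn.
move=> /(HN N.+1 r (leqnSn N)) [q [sq eq]].
have e0 : t ^+ N.+1 - (map_poly f q).[t] = 0.
  by apply: (NZD c0); rewrite mulrBr er eq subrr.
apply: intcl; exists ('X^(N.+1) - q).
  rewrite monicE lead_coefDl ?lead_coefXn // size_polyXn size_polyN //.
by rewrite /root rmorphB /= map_polyXn /= hornerD hornerN hornerXn e0.
Qed.

Lemma conductor0 (noeth : noetherian R) x : conductor f x -> x = 0.
Proof.
move=> H; have [c ec] := H 1; rewrite mul1r in ec; rewrite ec.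
have [->|c0] := eqVneq c 0; first by rewrite rmorph0.
exfalso; have [t0 ht0] := proj1 maxs.
have [r er] : exists r, t0 = f r.
  apply: (CHAIN noeth c0) => k; have [r er] := H (t0 ^+ k).
  by exists r; rewrite mulrC -ec.
exact: ht0 r er.
Qed.

Lemma Mnonzero (M : R -> Prop) : is_maximal_ideal M -> exists m, M m /\ m != 0.
Proof.
move=> [[M0 MD MM] M1 Mmax].
apply: NNPP => H0.
have Mz m : M m -> m = 0.
  move=> Mm; apply: NNPP => /eqP m0; apply: H0; by exists m.
have unit (r : R) : r != 0 -> exists a, a * r = 1.
  move=> r0; pose J (x : R) := exists a, x = a * r.
  have idJ : is_ideal J.
    split; first by exists 0; rewrite mul0r.
    - by move=> _ _ [a ->] [b ->]; exists (a + b); rewrite mulrDl.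
    - by move=> a _ [b ->]; exists (a * b); rewrite mulrA.
  case: (Mmax J idJ) => [x /Mz -> | [a ea] | sub]; first by exists 0; rewrite mul0r.
    by exists a; rewrite ea.
  by move: (sub r (ex_intro _ 1 (esym (mul1r r)))) => /Mz /eqP; rewrite (negbTE r0).
have [t0 ht0] := proj1 maxs.
pose S z := exists q : {poly R}, q`_1 = 0 /\ z = (map_poly f q).[t0].
have subS : is_subring S.
  split.
  - by exists 1; rewrite coefC rmorph1 hornerC.
  - move=> _ _ [q [q1 ->]] [q' [q1' ->]]; exists (q - q'); split.
      by rewrite coefB q1 q1' subrr.
    by rewrite rmorphB hornerD hornerN.
  - move=> _ _ [q [q1 ->]] [q' [q1' ->]]; exists (q * q'); split.
      by rewrite coefM big_ord_recr big_ord1 /= q1 q1' mulr0 mul0r addr0.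
    by rewrite rmorphM hornerM.
have inS r : S (f r) by exists r%:P; rewrite coefC map_polyC hornerC.
case: (proj2 maxs S subS inS) => [allS | subR].
- have [q [q1 e]] := allS t0.
  pose P := 'X - q.
  have P1 : P`_1 = 1 by rewrite coefB coefX q1 subr0.
  have Pn0 : P != 0 by apply/eqP => P0; move: P1; rewrite P0 coef0 => /eqP; rewrite eq_sym oner_eq0.
  have l0 : lead_coef P != 0 by rewrite lead_coef_eq0.
  have [a ea] := unit _ l0.
  have [r er] : exists r, t0 = f r.
    apply: intcl; exists (a *: P); first by rewrite monicE lead_coefZ ea.
    by rewrite /root map_polyZ hornerZ /P rmorphB /= map_polyX hornerD hornerN hornerX -e subrr mulr0.
  exact: ht0 r er.
- have [a ea] : exists a, t0 ^+ 2 = f a.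
    by apply: subR; exists 'X^2; rewrite coefXn map_polyXn hornerXn.
  have [r er] := int_X2 ea.
  exact: ht0 r er.
Qed.

Lemma principal (noeth : noetherian R) (M : R -> Prop) : crucial_maximal_ideal f M ->
  exists pi s, [/\ M pi, pi != 0, ~ M s & forall m, M m -> exists a, m * s = pi * a].
Proof.
move=> [Mmax _ Mother]; have Mmax' := Mmax; move: Mmax' => [[M0 MD MM] M1 Mmaxp].
have [t0 ht0] := proj1 maxs.
pose D (r : R) := exists a, f r * t0 = f a.
have idD : is_ideal D.
  split; first by exists 0; rewrite !rmorph0 mul0r.
  - by move=> x y [a ea] [b eb]; exists (a + b); rewrite !rmorphD mulrDl ea eb.
  - by move=> a x [b eb]; exists (a * b); rewrite !rmorphM -mulrA eb.
have nD1 : ~ D 1 by move=> [a ea]; apply: (ht0 a); rewrite -ea rmorph1 mul1r.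
pose F (c : R) (x : R) := D (x * c).
have idF c : is_ideal (F c).
  case: idD => D0 DD DM; split; rewrite /F.
  - by rewrite mul0r.
  - by move=> x y Fx Fy; rewrite mulrDl; apply: DD.
  - by move=> a x Fx; rewrite -mulrA; apply: DM.
have [c [nDc cmax]] := maxel noeth (G := fun c => ~ D c) nD1 idF.
have primeQ : is_prime_ideal (F c).
  split => //; first by rewrite /F mul1r.
  move=> a b Fab; case: (classic (F c a)) => Fa; [by left | right].
  have nDca : ~ D (c * a) by rewrite mulrC.
  have sub : forall x, F c x -> F (c * a) x.
    move=> x; rewrite /F => Dx; rewrite mulrA; case: idD => _ _ DM.
    by rewrite mulrC; apply: DM.
  apply: (cmax _ nDca sub); rewrite /F (_ : b * (c * a) = a * b * c) //; ring.
have QM : forall x, F c x <-> M x.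
  apply: NNPP => nQM; have := Mother _ primeQ nQM t0 1.
  have lU1 : locU f (F c) 1 by exists 1; rewrite rmorph1; split => //; rewrite /F mul1r.
  move=> /(_ lU1) [r [s' [[s0 [ns0 ->]] [u [[u0 [nu0 ->]] eu]]]]].
  have Dus : D (u0 * s0).
    exists (u0 * r); apply/eqP; rewrite -subr_eq0 !rmorphM; apply/eqP.
    by rewrite -eu; ring.
  have : F c (u0 * s0) by case: idD => _ _ DM; rewrite /F mulrC; apply: DM.
  case: primeQ => _ _ /(_ u0 s0) pr /pr [] //.
pose t := f c * t0.
have hM m : M m -> exists a, f m * t = f a.
  move=> /QM [a ea]; exists a; by rewrite /t mulrA -rmorphM.
have nt : ~ exists a, t = f a by move=> [a ea]; apply: nDc; exists a.
have [m1 [s [Mm1 nMs e1]]] : exists m1 s, [/\ M m1, ~ M s & f m1 * t = f s].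
  apply: NNPP => H.
  have H' m : M m -> exists a, M a /\ f m * t = f a.
    move=> Mm; have [a ea] := hM m Mm; exists a; split => //.
    by apply: NNPP => nMa; apply: H; exists m, a.
  have [m0 [Mm0 m00]] := Mnonzero Mmax.
  have Hk k : exists m', M m' /\ f m0 * t ^+ k = f m'.
    elim: k => [|k [m' [Mm' e']]]; first by exists m0; rewrite expr0 mulr1.
    have [a [Ma ea]] := H' m' Mm'; exists a; split => //.
    by rewrite exprS mulrCA e' mulrC ea.
  apply: nt; apply: (CHAIN noeth m00) => k.
  by have [m' [_ e']] := Hk k; exists m'.
exists m1, s; split => //.
- by apply/eqP => m10; apply: nMs; move: e1; rewrite m10 rmorph0 mul0r => /esym /f0 ->.
- move=> m Mm; have [a ea] := hM m Mm; exists a; apply: finj.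
  by rewrite !rmorphM -ea -e1; ring.
Qed.
End Ext.

Lemma frac_repr (R : idomainType) (x : {fraction R}) :
  exists a b : R, b != 0 /\ x = FracField.tofrac a / FracField.tofrac b.
Proof.
elim/quotW: x => y; exists (y.1), (y.2); split; first exact: denom_ratioP.
rewrite /FracField.tofrac /= -!lock.
have E (a b : {ratio R}) : (\pi_{fraction R} a) * (\pi_{fraction R} b)^-1 =
    \pi_{fraction R} (FracField.mulf a (FracField.invf b)).
  by rewrite FracField.pi_mul FracField.pi_inv.
rewrite E; apply/eqmodP; rewrite /= FracField.equivfE.
have d0 := denom_ratioP y.
rewrite /FracField.mulf /FracField.invf.
rewrite !(numer_Ratio _ (oner_neq0 R)) !(denom_Ratio _ (oner_neq0 R)).
rewrite (numer_Ratio _ d0) (denom_Ratio _ d0) mulr1 mul1r.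
by rewrite (numer_Ratio _ d0) (denom_Ratio _ d0) mulrC.
Qed.


Lemma int_nat (z : int) : 0 <= z -> exists k : nat, z = k%:Z.
Proof. by case: z => [k _|k //]; exists k. Qed.

Lemma fld (F : fieldType) (A B W U W' U' : F) : U != 0 -> U' != 0 -> W' != 0 -> B != 0 ->
  A * W / U / (B * W' / U') * (U * W') = A / B * (W * U').
Proof. by move=> *; field; apply/and4P; split. Qed.

Lemma alg1 (F : comNzRingType) (A B C D E G : F) :
  A * B * C + A * D * E * G = A * (B * C + D * E * G).
Proof. by rewrite mulrDr !mulrA. Qed.

Section DVR.
Variables (R : idomainType) (M : R -> Prop) (pi s : R).
Hypothesis noeth : noetherian R.
Hypothesis Mmax : is_maximal_ideal M.
Hypotheses (Mpi : M pi) (pi0 : pi != 0) (nMs : ~ M s).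
Hypothesis hpi : forall m, M m -> exists a, m * s = pi * a.

Lemma M0 : M 0. Proof. by case: Mmax => [[]]. Qed.
Lemma MM a x : M x -> M (a * x). Proof. by case: Mmax => [[_ _ h]] _ _; apply: h. Qed.
Lemma MMr a x : M x -> M (x * a). Proof. by rewrite mulrC; apply: MM. Qed.

Lemma Mprime a b : ~ M a -> ~ M b -> ~ M (a * b).
Proof.
move=> na nb Mab; case: Mmax => [[M0 MD MM'] M1 Mmaxp].
pose J (x : R) := exists m y, M m /\ x = m + y * a.
have idJ : is_ideal J.
  split; first by exists 0, 0; rewrite mul0r addr0.
  - move=> _ _ [m [y [Mm ->]]] [m' [y' [Mm' ->]]]; exists (m + m'), (y + y'); split; first exact: MD.
    by ring.
  - move=> c _ [m [y [Mm ->]]]; exists (c * m), (c * y); split; first exact: MM'.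
    by ring.
have subJ x : M x -> J x by move=> Mx; exists x, 0; rewrite mul0r addr0.
case: (Mmaxp J idJ subJ) => [[m [y [Mm e]]] | sub].
- apply: nb; have -> : b = m * b + y * (a * b) by rewrite mulrA -mulrDl -e mul1r.
  by apply: MD; [rewrite mulrC; apply: MM' | apply: MM'].
- by apply: na; apply: sub; exists 0, 1; rewrite add0r mul1r; split.
Qed.

Lemma Mpow k w : (0 < k)%N -> M (pi ^+ k * w).
Proof. by case: k => // k _; rewrite exprS -mulrA; apply: MMr. Qed.

Lemma ord_ex r : r != 0 -> exists (n : nat) u w, [/\ ~ M u, ~ M w & r * u = pi ^+ n * w].
Proof.
move=> r0; apply: NNPP => H.
have Hn n : exists u a, ~ M u /\ r * u = pi ^+ n * a.
  elim: n => [|n [u [a [nu e]]]]; first by exists 1, r; rewrite mulr1 expr0 mul1r; split => //; case: Mmax.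
  case: (classic (M a)) => Ma; last by exfalso; apply: H; exists n, u, a.
  have [a' ea'] := hpi Ma.
  exists (u * s), a'; split; first exact: Mprime.
  by rewrite mulrA e -mulrA ea' exprSr; ring.
pose J (n : nat) (x : R) := exists u b, ~ M u /\ x * u * pi ^+ n = r * b.
have nM1 : ~ M 1 by case: Mmax.
have idJ n : is_ideal (J n).
  split; first by exists 1, 0; rewrite !mul0r mulr0.
  - move=> x y [u [b [nu e]]] [u' [b' [nu' e']]]; exists (u * u'), (b * u' + b' * u).
    split; first exact: Mprime.
    have -> : r * (b * u' + b' * u) = (r * b) * u' + (r * b') * u by ring.
    by rewrite -e -e'; ring.
  - move=> c x [u [b [nu e]]]; exists u, (c * b); split => //.
    have -> : c * x * u * pi ^+ n = c * (x * u * pi ^+ n) by ring.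
    by rewrite e; ring.
have incJ n x : J n x -> J n.+1 x.
  by move=> [u [b [nu e]]]; exists u, (b * pi); split => //; rewrite exprSr mulrA e mulrA.
have [N HN] := noeth idJ incJ.
have [u [a [nu e]]] := Hn N.+1.
have : J N.+1 a by exists 1, u; split => //; rewrite mulr1 e mulrC.
move=> /(HN N.+1 a (leqnSn N)) [v [b [nv e']]].
have : r * (u * v - pi * b) = 0.
  have -> : r * (u * v - pi * b) = (r * u) * v - pi * (r * b) by ring.
  by rewrite e -e' exprS; ring.
move/eqP; rewrite mulf_eq0 (negbTE r0) /= subr_eq0 => /eqP euv.
by apply: (Mprime nu nv); rewrite euv; apply: MMr.
Qed.


Local Notation tf := (@FracField.tofrac R).

Definition V (x : {fraction R}) (n : int) :=
  exists u w, [/\ ~ M u, ~ M w & x * tf u = (tf pi) ^ n * tf w].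

Lemma nM0 u : ~ M u -> u != 0.
Proof. by move=> nu; apply/eqP => u0; apply: nu; rewrite u0; exact: M0. Qed.

Lemma tf0 u : u != 0 -> tf u != 0.
Proof. by rewrite tofrac_eq0. Qed.

Lemma P0 : tf pi != 0. Proof. exact: tf0. Qed.

Lemma V_aux x n (k : nat) : x != 0 -> V x n -> V x (n + k%:Z) -> k = 0%N.
Proof.
move=> x0 [u [w [nu nw e]]] [u' [w' [nu' nw' e']]].
have Pn0 : tf pi ^ n != 0 by apply: expfz_neq0; exact: P0.
have E : tf pi ^ n * tf (w * u') = tf pi ^ n * tf (pi ^+ k * w' * u).
  rewrite !rmorphM /= rmorphXn /=.
  have -> : tf pi ^ n * (tf w * tf u') = (x * tf u) * tf u' by rewrite e; ring.
  have -> : tf pi ^ n * (tf pi ^+ k * tf w' * tf u) = (tf pi ^ n * tf pi ^+ k * tf w') * tf u by ring.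
  by rewrite exprnP -expfzDr ?P0 // -e'; ring.
move: (mulfI Pn0 E) => /eqP; rewrite tofrac_eq => /eqP E'.
case: k E' {E e'} => // k E'; exfalso.
by apply: (Mprime nw nu'); rewrite E' -mulrA; apply: Mpow.
Qed.

Lemma V_uniq x n m : x != 0 -> V x n -> V x m -> n = m.
Proof.
move=> x0; wlog le : n m / n <= m => [H Vn Vm|].
  by case: (lerP n m) => [h|h]; [apply: H | apply/esym; apply: H => //; apply: ltW].
move=> Vn Vm; have [k ek] := @int_nat (m-n) (eq_ind_r is_true le (subr_ge0 n m)).
have em : m = n + k%:Z by rewrite -ek addrC subrK.
by rewrite em in Vm; rewrite em (V_aux x0 Vn Vm) addr0.
Qed.


Lemma tf_div a u b : ~ M u -> tf a * tf u = b -> tf a = b / tf u.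
Proof. by move=> nu <-; rewrite mulfK // tf0 // nM0. Qed.

Lemma V_ex x : x != 0 -> exists n, V x n.
Proof.
move=> x0; have [a [b [b0 ex]]] := frac_repr x.
have a0 : a != 0 by apply/eqP => a0; move: x0; rewrite ex a0 tofrac0 mul0r eqxx.
have [na [u [w [nu nw ea]]]] := ord_ex a0.
have [nb [u' [w' [nu' nw' eb]]]] := ord_ex b0.
exists (na%:Z - nb%:Z), (u * w'), (w * u'); split; [exact: Mprime | exact: Mprime |].
have Ea : tf a = tf pi ^+ na * tf w / tf u.
  by apply: (@tf_div a u _ nu); rewrite -rmorphM ea rmorphM rmorphXn.
have Eb : tf b = tf pi ^+ nb * tf w' / tf u'.
  by apply: (@tf_div b u' _ nu'); rewrite -rmorphM eb rmorphM rmorphXn.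
rewrite ex Ea Eb !rmorphM /= expfzDr ?P0 // -exprnN -exprnP.
apply: fld; rewrite ?tf0 ?nM0 //; exact: expf_neq0 P0.
Qed.


Lemma Vex' x : exists n, x != 0 -> V x n.
Proof.
case: (eqVneq x 0) => [-> | x0]; first by exists 0.
by have [n Vn] := V_ex x0; exists n.
Qed.

Definition v x := proj1_sig (constructive_indefinite_description _ (Vex' x)).
Lemma vP x : x != 0 -> V x (v x).
Proof. exact: (proj2_sig (constructive_indefinite_description _ (Vex' x))). Qed.

Lemma vE x n : x != 0 -> V x n -> v x = n.
Proof. by move=> x0 Vn; apply: (V_uniq x0 (vP x0) Vn). Qed.

Lemma Vmul x y n m : V x n -> V y m -> V (x * y) (n + m).
Proof.
move=> [u [w [nu nw e]]] [u' [w' [nu' nw' e']]].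
exists (u * u'), (w * w'); split; try exact: Mprime.
rewrite !rmorphM expfzDr ?P0 //.
have -> : x * y * (tf u * tf u') = (x * tf u) * (y * tf u') by ring.
by rewrite e e'; ring.
Qed.

Lemma vmin_aux x y : x != 0 -> y != 0 -> x + y != 0 -> v x <= v y -> v x <= v (x + y).
Proof.
move=> x0 y0 xy0 le.
have [k ek] := @int_nat (v y - v x) (eq_ind_r is_true le (subr_ge0 (v x) (v y))).
have ey : v y = v x + k%:Z by rewrite -ek addrC subrK.
have [u [w [nu nw e]]] := vP x0.
have := vP y0; rewrite ey => -[u' [w' [nu' nw' e']]].
pose z := w * u' + pi ^+ k * w' * u.
have Ez : (x + y) * tf (u * u') = tf pi ^ v x * tf z.
  rewrite /z rmorphD !rmorphM rmorphXn /=.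
  have -> : (x + y) * (tf u * tf u') = (x * tf u) * tf u' + (y * tf u') * tf u by ring.
  rewrite e e' expfzDr ?P0 //; exact: alg1.
have z0 : z != 0.
  apply/eqP => z0; move: Ez; rewrite z0 rmorph0 mulr0 => /eqP.
  have nz : tf (u * u') != 0 by rewrite tf0 // mulf_neq0 // nM0.
  by rewrite mulf_eq0 (negbTE xy0) (negbTE nz).
have [j [u'' [w'' [nu'' nw'' ez]]]] := ord_ex z0.
have : V (x + y) (v x + j%:Z).
  exists (u * u' * u''), w''; split => //; first by apply: Mprime => //; apply: Mprime.
  rewrite rmorphM mulrA Ez -mulrA -rmorphM ez rmorphM rmorphXn /= expfzDr ?P0 // -exprnP.
  by rewrite mulrA.
move/(vE xy0) => ->; by rewrite lerDl.
Qed.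

Lemma dvr : is_DVR_in_frac (loc_in_frac M).
Proof.
exists v; split.
- split.
  + move=> x y x0 y0; apply: vE; first by rewrite mulf_neq0.
    exact: Vmul (vP x0) (vP y0).
  + move=> x y x0 y0 xy0; rewrite ge_min.
    case: (lerP (v x) (v y)) => h; first by rewrite vmin_aux.
    apply/orP; right; rewrite addrC; apply: vmin_aux => //; [by rewrite addrC | exact: ltW].
  + move=> n; exists (tf pi ^ n); split; first exact: expfz_neq0 P0.
    apply: vE; first exact: expfz_neq0 P0.
    by exists 1, 1; split; try (by case: Mmax); rewrite rmorph1 !mulr1.
- move=> x; split.
  + move=> [a [t [nt ->]]].
    case: (eqVneq a 0) => [-> | a0]; first by left; rewrite tofrac0 mul0r.
    have ta : tf a != 0 := tf0 a0.
    have tt : tf t != 0 := tf0 (nM0 nt).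
    right; have x0 : tf a / tf t != 0 by rewrite mulf_neq0 ?invr_eq0.
    split => //.
    have [k [u [w [nu nw ea]]]] := ord_ex a0.
    rewrite (vE (n := k%:Z) x0) //.
    exists (t * u), w; split; first exact: Mprime.
      done.
    rewrite rmorphM mulrA divfK ?tf0 ?nM0 // -rmorphM ea rmorphM rmorphXn.
    done.
  + move=> [-> | [x0 hv]].
      exists 0, 1; split; first by case: Mmax.
      by rewrite tofrac0 mul0r.
    have [k ek] := int_nat hv.
    have := vP x0; rewrite ek => -[u [w [nu nw e]]].
    exists (pi ^+ k * w), u; split => //.
    rewrite rmorphM rmorphXn; apply: (mulIf (tf0 (nM0 nu))); rewrite divfK ?tf0 ?nM0 //; exact: e.
Qed.

End DVR.

Unset Implicit Arguments.
Theorem proposition3p12 (R : idomainType) (T : comNzRingType)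
    (f : {rmorphism R -> T}) (M : R -> Prop) :
  injective f ->
  normal_domain R ->
  noetherian R ->
  maximal_subring f ->
  int_closed_in f ->
  crucial_maximal_ideal f M ->
  (forall x : T, conductor f x -> x = 0) /\ is_DVR_in_frac (loc_in_frac M).
Proof.
move=> finj _ noeth maxs intcl cruc.
split; first by move=> x; apply: (conductor0 finj maxs intcl noeth).
have [pi [s [Mpi pi0 nMs hpi]]] := principal finj maxs intcl noeth cruc.
case: cruc => Mmax _ _.
exact: (dvr noeth Mmax Mpi pi0 nMs hpi).
Qed.
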